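(* Let $A$ be Hurwitz and let $M_{\rm initial},\sigma_{\rm slowest}>0$ satisfy $\|e^{At}\|_2\le M_{\rm initial}e^{-\sigma_{\rm slowest}t}$ for all $t\ge0$. Let $\widetilde M_{\rm loose}=2M_{\rm initial}\|B\|_2/\sigma_{\rm slowest}$ and $\mathcal{B}_{\rm ultimate}=\{x\in\mathbb{R}^n:\|x\|_2\le\widetilde M_{\rm loose}\}$. Let $x(\cdot)$ be a trajectory of the relay feedback system $\dot x=Ax-B\,\mathrm{sign}(Cx)$ with $x(0)\in\mathcal{B}_{\rm ultimate}$. Then for all times $t$ greater than $t_{\rm excursions\text{-}over}=\frac{1}{\sigma_{\rm slowest}}\log(2M_{\rm initial})$, $x(t)\in\mathcal{B}_{\rm ultimate}$ (although at earlier times the state may leave $\mathcal{B}_{\rm ultimate}$).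
   Context: $A$ is the $n\times n$ observer canonical matrix ($A_{i+1,i}=1$ for $i=1,\dots,n-1$, last column $(-a_0,\dots,-a_{n-1})^T$, other entries zero), $B=(b_0,\dots,b_{n-1})^T$, $C=(0,\dots,0,1)$. $\mathrm{sign}(e)=1$ for $e>0$, $-1$ for $e<0$, and $[-1,1]$ for $e=0$; trajectories are (Filippov) solutions, and on the switching set one uses non-sliding solutions. *)

(* Defs.v *)
From HB Require Import structures.
From mathcomp Require Import all_boot all_order all_algebra.
From mathcomp Require Import all_classical all_reals all_analysis.
From mathcomp Require complex.
Import complex.ComplexField.

Set Implicit Arguments.
Unset Strict Implicit.
Unset Printing Implicit Defensive.

Import Order.TTheory GRing.Theory Num.Theory.
Import numFieldNormedType.Exports.
Local Open Scope classical_set_scope.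
Local Open Scope ring_scope.

Section RelayDefs.
Variable R : realType.

Definition obsA (n : nat) (a : 'I_n -> R) : 'M[R]_n :=
  \matrix_(i < n, j < n)
    if (i == j.+1 :> nat) then 1
    else if (j == n.-1 :> nat) then - a i else 0.

Definition obsB (n : nat) (b : 'I_n -> R) : 'cV[R]_n := \col_(i < n) b i.

Definition obsC (n : nat) : 'rV[R]_n :=
  \row_(j < n) (if (j == n.-1 :> nat) then 1 else 0).

Definition vnorm2 (n : nat) (x : 'cV[R]_n) : R :=
  Num.sqrt (\sum_(i < n) x i ord0 ^+ 2).

Definition opnorm2 (n : nat) (M : 'M[R]_n) : R :=
  sup [set vnorm2 (M *m x) | x in [set x : 'cV[R]_n | vnorm2 x <= 1]].

Definition expmt (n : nat) (A : 'M[R]_n) (t : R) : 'M[R]_n :=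
  \matrix_(i < n, j < n)
    limn (fun N : nat => \sum_(0 <= k < N) (t ^+ k / (k`!)%:R * (A ^+ k) i j)).

Definition hurwitz (n : nat) (A : 'M[R]_n) : Prop :=
  forall z : complex.complex R,
    eigenvalue (map_mx (fun r : R => complex.Complex r 0) A) z ->
    complex.Re z < 0.

Definition sign_set (e : R) : set R :=
  if 0 < e then [set 1] else if e < 0 then [set -1] else `[-1, 1]%classic.

(* Filippov solution on [0,+oo) of xdot = A x - B sign(C x), in integral form:
   x is continuous and there is a measurable selection u(s) in sign(C x(s))
   with x(t) = x(0) + int_0^t (A x(s) - B u(s)) ds for all t >= 0. *)
Definition filippov_solution (n : nat) (A : 'M[R]_n) (B : 'cV[R]_n)
    (C : 'rV[R]_n) (x : R -> 'cV[R]_n) : Prop :=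
  (forall i, {within [set t : R | 0 <= t], continuous (fun t : R => x t i ord0)}) /\
  exists u : R -> R,
    measurable_fun (`[0, +oo[%classic : set R) u /\
    (forall s, 0 <= s -> sign_set ((C *m x s) ord0 ord0) (u s)) /\
    (forall t, 0 <= t -> forall i,
       x t i ord0 = x 0 i ord0 +
         Rintegral lebesgue_measure `[0, t]%classic
           (fun s => (A *m x s - u s *: B) i ord0)).

Definition non_sliding (n : nat) (C : 'rV[R]_n) (x : R -> 'cV[R]_n) : Prop :=
  ~ exists t1 t2, 0 <= t1 /\ t1 < t2 /\
      (forall s, t1 <= s <= t2 -> (C *m x s) ord0 ord0 = 0).

End RelayDefs.

(* Main.v *)
Require Import Defs.
From HB Require Import structures.
From mathcomp Require Import all_boot all_order all_algebra.
From mathcomp Require Import all_classical all_reals all_analysis.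
From mathcomp Require Import ring lra.
From mathcomp Require Import measurable_realfun.

Import Order.TTheory GRing.Theory Num.Theory.
Import numFieldNormedType.Exports.
Local Open Scope classical_set_scope.
Local Open Scope ring_scope.
Set Implicit Arguments.
Unset Strict Implicit.
Unset Printing Implicit Defensive.
Section VN.
Variable R : realType.
Implicit Types (n : nat).

Lemma sumsq_le_sqsum (I : Type) (r : seq I) (F : I -> R) :
  (forall i, 0 <= F i) ->
  \sum_(i <- r) F i ^+ 2 <= (\sum_(i <- r) F i) ^+ 2.
Proof.
move=> F0; elim: r => [|i r IH]; first by rewrite !big_nil expr0n.
rewrite !big_cons.
have S0 : 0 <= \sum_(j <- r) F j by apply: sumr_ge0 => j _.
have := F0 i; nra.
Qed.

Lemma vnorm2_ge0 n (v : 'cV[R]_n) : 0 <= vnorm2 v.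
Proof. exact: sqrtr_ge0. Qed.

Lemma sumsq_ge0 n (v : 'cV[R]_n) : 0 <= \sum_(i < n) v i ord0 ^+ 2.
Proof. by apply: sumr_ge0 => i _; exact: sqr_ge0. Qed.

Lemma vnorm2_sq n (v : 'cV[R]_n) : vnorm2 v ^+ 2 = \sum_(i < n) v i ord0 ^+ 2.
Proof. by rewrite /vnorm2 sqr_sqrtr // sumsq_ge0. Qed.

Lemma vnorm2_leP n (v : 'cV[R]_n) c : 0 <= c ->
  \sum_(i < n) v i ord0 ^+ 2 <= c ^+ 2 -> vnorm2 v <= c.
Proof.
move=> c0 h; rewrite /vnorm2 -(ger0_norm c0) -sqrtr_sqr.
by rewrite ler_sqrt // sqr_ge0.
Qed.

Lemma entry_le_vnorm2 n (v : 'cV[R]_n) i : `|v i ord0| <= vnorm2 v.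
Proof.
rewrite -sqrtr_sqr /vnorm2 ler_sqrt ?sumsq_ge0 //.
rewrite (bigD1 i) //= lerDl; apply: sumr_ge0 => j _; exact: sqr_ge0.
Qed.

Lemma vnorm2_le_sum n (v : 'cV[R]_n) : vnorm2 v <= \sum_(i < n) `|v i ord0|.
Proof.
apply: vnorm2_leP; first by apply: sumr_ge0.
have := @sumsq_le_sqsum _ (index_enum 'I_n) (fun i => `|v i ord0|) (fun i => normr_ge0 _).
apply: le_trans; apply: ler_sum => i _; by rewrite real_normK ?num_real.
Qed.

Lemma vnorm2Z n (v : 'cV[R]_n) c : vnorm2 (c *: v) = `|c| * vnorm2 v.
Proof.
rewrite /vnorm2 -sqrtr_sqr -sqrtrM ?sqr_ge0 //; congr Num.sqrt.
rewrite mulr_sumr; apply: eq_bigr => i _; rewrite mxE; exact: exprMn.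
Qed.

Lemma vnorm20 n : vnorm2 (0 : 'cV[R]_n) = 0.
Proof. by rewrite -(scale0r (0 : 'cV[R]_n)) vnorm2Z normr0 mul0r. Qed.

Lemma vnorm2N n (v : 'cV[R]_n) : vnorm2 (- v) = vnorm2 v.
Proof. by rewrite -scaleN1r vnorm2Z normrN1 mul1r. Qed.

Lemma vnorm2_eq0 n (v : 'cV[R]_n) : vnorm2 v = 0 -> forall i, v i ord0 = 0.
Proof.
move=> h i; apply/eqP; rewrite -normr_le0 -h; exact: entry_le_vnorm2.
Qed.

Lemma cauchy_schwarz n (u v : 'cV[R]_n) :
  \sum_(i < n) u i ord0 * v i ord0 <= vnorm2 u * vnorm2 v.
Proof.
set a := vnorm2 u; set b := vnorm2 v.
have a0 : 0 <= a by exact: vnorm2_ge0.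
have b0 : 0 <= b by exact: vnorm2_ge0.
have [a_eq0|a_ne0] := eqVneq a 0.
  rewrite a_eq0 mul0r big1 // => i _; by rewrite (@vnorm2_eq0 _ u a_eq0 i) mul0r.
have [b_eq0|b_ne0] := eqVneq b 0.
  rewrite b_eq0 mulr0 big1 // => i _; by rewrite (@vnorm2_eq0 _ v b_eq0 i) mulr0.
have ab0 : 0 < a * b by rewrite mulr_gt0 // lt0r ?a_ne0 ?b_ne0.
have key : \sum_(i < n) (2 * (a * b)) * (u i ord0 * v i ord0)
   <= \sum_(i < n) (b ^+ 2 * u i ord0 ^+ 2 + a ^+ 2 * v i ord0 ^+ 2).
  apply: ler_sum => i _.
  have := sqr_ge0 (b * u i ord0 - a * v i ord0); nra.
rewrite -mulr_sumr big_split /= -!mulr_sumr -!vnorm2_sq -/a -/b in key.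
rewrite -(ler_pM2l (_ : 0 < 2 * (a * b))); last by rewrite mulr_gt0.
apply: le_trans key _; nra.
Qed.

Lemma vnorm2D n (u v : 'cV[R]_n) : vnorm2 (u + v) <= vnorm2 u + vnorm2 v.
Proof.
apply: vnorm2_leP; first by rewrite addr_ge0 ?vnorm2_ge0.
have cs := cauchy_schwarz u v.
have -> : \sum_(i < n) (u + v) i ord0 ^+ 2 =
   \sum_(i < n) u i ord0 ^+ 2 + \sum_(i < n) v i ord0 ^+ 2
   + 2 * \sum_(i < n) u i ord0 * v i ord0.
  rewrite mulr_sumr -!big_split /=; apply: eq_bigr => i _; rewrite mxE; ring.
rewrite -!vnorm2_sq; nra.
Qed.

Lemma vnorm2_sum n (I : Type) (r : seq I) (F : I -> 'cV[R]_n) :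
  vnorm2 (\sum_(i <- r) F i) <= \sum_(i <- r) vnorm2 (F i).
Proof.
elim: r => [|i r IH]; first by rewrite !big_nil vnorm20.
rewrite !big_cons; apply: le_trans (vnorm2D _ _) _; exact: lerD.
Qed.

Definition mnrm n (Q : 'M[R]_n) := \sum_(i < n) \sum_(j < n) `|Q i j|.

Lemma mnrm_ge0 n (Q : 'M[R]_n) : 0 <= mnrm Q.
Proof. by apply: sumr_ge0 => i _; apply: sumr_ge0. Qed.

Lemma vnorm2_mul_mnrm n (Q : 'M[R]_n) (v : 'cV[R]_n) :
  vnorm2 (Q *m v) <= mnrm Q * vnorm2 v.
Proof.
apply: le_trans (vnorm2_le_sum _) _.
rewrite /mnrm mulr_suml; apply: ler_sum => i _.
rewrite mxE mulr_suml; apply: le_trans (ler_norm_sum _ _ _) _.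
apply: ler_sum => j _; rewrite normrM; apply: ler_wpM2l => //.
exact: entry_le_vnorm2.
Qed.

Lemma opnorm2_bound n (Q : 'M[R]_n) (v : 'cV[R]_n) :
  vnorm2 (Q *m v) <= opnorm2 Q * vnorm2 v.
Proof.
set S := [set vnorm2 (Q *m x) | x in [set x : 'cV[R]_n | vnorm2 x <= 1]].
have hub : has_ubound S.
  exists (mnrm Q) => _ [y /= y1 <-].
  apply: le_trans (vnorm2_mul_mnrm _ _) _.
  rewrite -[X in _ <= X]mulr1; apply: ler_wpM2l => //; exact: mnrm_ge0.
have [v0|v0] := eqVneq (vnorm2 v) 0.
  have -> : v = 0 by apply/matrixP => i j; rewrite (ord1 j) (vnorm2_eq0 v0) mxE.
  by rewrite mulmx0 vnorm20 mulr0.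
have vp : 0 < vnorm2 v by rewrite lt0r v0 vnorm2_ge0.
have hw : S (vnorm2 (Q *m ((vnorm2 v)^-1 *: v))).
  exists ((vnorm2 v)^-1 *: v) => //=.
  by rewrite vnorm2Z ger0_norm ?invr_ge0 ?vnorm2_ge0 // mulVf.
have := ub_le_sup hub hw.
rewrite -scalemxAr vnorm2Z ger0_norm ?invr_ge0 ?vnorm2_ge0 // => h.
by rewrite -ler_pdivrMr // mulrC.
Qed.

End VN.
Section ExpSeries.
Variable R : realType.

Lemma series_bound (a : R^nat) (C z : R) : 0 <= C -> 0 <= z ->
  (forall k, `|a k| <= C * exp_coeff z k) ->
  cvgn (series a) /\ `|limn (series a)| <= C * expR z.
Proof.
move=> C0 z0 ha.
have cv : cvgn (series (C *: exp_coeff z)) by apply: is_cvg_seriesZ; exact: is_cvg_series_exp_coeff.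
have cn : cvgn (series (fun k => `|a k|)).
  apply: (series_le_cvg _ _ _ cv) => k /=; first exact: normr_ge0.
    by rewrite mulr_ge0 // exp_coeff_ge0.
  exact: ha.
split; first exact: normed_cvg.
apply: le_trans (lim_series_norm cn) _.
have -> : C * expR z = limn (series (C *: exp_coeff z)).
  by rewrite lim_seriesZ //; exact: is_cvg_series_exp_coeff.
apply: lim_series_le => // k /=; exact: ha.
Qed.

Lemma series_shift0 (g : R^nat) : g 0%N = 0 ->
  series (fun k => g k.+1) = (fun N => series g N.+1).
Proof.
move=> g0; apply/funext => N; rewrite /series /= big_nat_recl //= g0 add0r.
by [].
Qed.

Lemma lim_shiftS (u : R^nat) : cvgn u -> cvgn (fun N => u N.+1) /\ limn (fun N => u N.+1) = limn u.
Proof.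
move=> cu.
have h : (fun N => u N.+1) @ \oo --> limn u.
  have := cvg_shiftS u (nbhs (limn u)).
  rewrite /=. move=> ->; exact: cu.
split; first by apply/cvg_ex; exists (limn u).
exact: cvg_lim h.
Qed.

Lemma Dk_bound (tau h Y : R) k : 0 <= tau -> 0 <= h -> 0 < Y -> tau + h <= Y ->
  let D := fun k : nat => (tau + h) ^+ k - tau ^+ k - k%:R * h * tau ^+ k.-1 in
  0 <= D k /\ Y ^+ 2 * D k <= h ^+ 2 * (4 * Y) ^+ k.
Proof.
move=> t0 h0 Y0 tY D.
have tle : tau <= Y by lra.
case: k => [|k].
  have -> : D 0%N = 0 by rewrite /D /= !expr0; ring.
  by rewrite lexx mulr0 expr0 mulr1 sqr_ge0.
elim: k => [|k [IH1 IH2]].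
  have -> : D 1%N = 0 by rewrite /D /= !expr1 expr0; ring.
  rewrite mulr0 lexx; split => //; apply: mulr_ge0; [exact: sqr_ge0|].
  rewrite expr1; lra.
have rec : D k.+2 = (tau + h) * D k.+1 + k.+1%:R * h ^+ 2 * tau ^+ k.
  rewrite /D /= !exprS; ring.
have tk0 : 0 <= tau ^+ k by exact: exprn_ge0.
have tkY : tau ^+ k <= Y ^+ k.
  by apply: lerXn2r; rewrite ?nnegrE; lra.
have k4 : k.+1%:R <= 3 * 4 ^+ k.+1 :> R.
  have : (k.+1 < 4 ^ k.+1)%N by apply: ltn_expl.
  rewrite -(ltr_nat R) natrX => /ltW H; apply: le_trans H _.
  have : 0 <= 4 ^+ k.+1 :> R by exact: exprn_ge0.
  lra.
rewrite rec; split.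
  apply: addr_ge0; first by apply: mulr_ge0 => //; lra.
  by rewrite !mulr_ge0 ?sqr_ge0.
have Yk0 : 0 <= Y ^+ k by apply: exprn_ge0; lra.
have e1 : (4 * Y) ^+ k.+2 = 16 * 4 ^+ k * Y ^+ 2 * Y ^+ k.
  rewrite exprMn !exprS; ring.
have e2 : (4 * Y) ^+ k.+1 = 4 * 4 ^+ k * Y * Y ^+ k.
  rewrite exprMn !exprS; ring.
rewrite e2 in IH2; rewrite e1.
have : k.+1%:R <= 3 * (4 * 4 ^+ k) :> R by rewrite -exprS.
move=> kk; have f0 : 0 <= 4 ^+ k :> R by apply: exprn_ge0.
set K := k.+1%:R in kk *.
set F := 4 ^+ k in f0 kk IH2 *.
set T := tau ^+ k in tk0 tkY *.
set YK := Y ^+ k in Yk0 tkY IH2 *.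
set d := D k.+1 in IH1 IH2 *.
have hh : 0 <= h ^+ 2 by exact: sqr_ge0.
set H := h ^+ 2 in hh IH2 *.
have K0 : 0 <= K by rewrite /K ler0n.
have step1 : Y ^+ 2 * d * (tau + h) <= H * (4 * F * Y * YK) * Y.
  by apply: ler_pM => //; [rewrite mulr_ge0 // sqr_ge0 | lra].
have step2 : Y ^+ 2 * (K * H * T) <= Y ^+ 2 * (K * H * YK).
  apply: ler_wpM2l; first exact: sqr_ge0.
  by apply: ler_wpM2l => //; exact: mulr_ge0.
have step3 : K * (H * Y ^+ 2 * YK) <= 3 * (4 * F) * (H * Y ^+ 2 * YK).
  apply: ler_wpM2r => //; apply: mulr_ge0 => //; apply: mulr_ge0 => //; exact: sqr_ge0.
lra.
Qed.

Lemma lim_shiftS_inv (u : R^nat) : cvgn (fun N => u N.+1) -> cvgn u /\ limn u = limn (fun N => u N.+1).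
Proof.
move=> cu.
have h : u @ \oo --> limn (fun N => u N.+1).
  have := cvg_shiftS u (nbhs (limn (fun N => u N.+1))).
  move=> <-; exact: cu.
split; first by apply/cvg_ex; exists (limn (fun N => u N.+1)).
exact: cvg_lim h.
Qed.

Lemma lim_series_big (I : Type) (r : seq I) (F : I -> R^nat) :
  (forall l, cvgn (series (F l))) ->
  cvgn (series (fun k => \sum_(l <- r) F l k)) /\
  limn (series (fun k => \sum_(l <- r) F l k)) = \sum_(l <- r) limn (series (F l)).
Proof.
move=> cF; elim: r => [|i r [IH1 IH2]].
  have -> : series (fun k => \sum_(l <- [::]) F l k) = fun _ => 0.
    by apply/funext => N; rewrite /series /= big1 // => k _; rewrite big_nil.
  rewrite big_nil; split; first exact: is_cvg_cst.
  exact: lim_cst.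
have -> : (fun k => \sum_(l <- i :: r) F l k) = F i + (fun k => \sum_(l <- r) F l k).
  by apply/funext => k; rewrite big_cons.
split; first exact: is_cvg_seriesD.
by rewrite lim_seriesD // IH2 big_cons.
Qed.

End ExpSeries.
Section MatExp.
Variable R : realType.
Variable n : nat.
Variable A : 'M[R]_n.

Definition ecoef (tau : R) (i j : 'I_n) : R^nat :=
  fun k => tau ^+ k / (k`!)%:R * (A ^+ k) i j.

Definition cA : R := n%:R * mnrm A.

Lemma cA_ge0 : 0 <= cA.
Proof. by rewrite /cA mulr_ge0 // mnrm_ge0. Qed.

Lemma entry_le_mnrm (Q : 'M[R]_n) i j : `|Q i j| <= mnrm Q.
Proof.
rewrite /mnrm (bigD1 i) //= (bigD1 j) //= -addrA lerDl.
apply: addr_ge0; first by apply: sumr_ge0.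
by apply: sumr_ge0 => k _; apply: sumr_ge0.
Qed.

Lemma powA_bound k i j : `|(A ^+ k) i j| <= cA ^+ k.
Proof.
elim: k i j => [|k IH] i j.
  by rewrite expr0 -idmxE mxE; case: (i == j); rewrite ?normr1 ?normr0.
rewrite exprSr -mulmxE mxE.
apply: le_trans (ler_norm_sum _ _ _) _.
apply: (@le_trans _ _ (\sum_(l < n) cA ^+ k * mnrm A)).
  apply: ler_sum => l _; rewrite normrM.
  by apply: ler_pM => //; exact: entry_le_mnrm.
rewrite big_const_ord iter_addr addr0 -mulr_natr exprSr /cA.
have -> : cA ^+ k * mnrm A * n%:R = cA ^+ k * (n%:R * mnrm A) by ring.
by [].
Qed.

Lemma ecoef_bound tau i j k : `|ecoef tau i j k| <= 1 * exp_coeff (`|tau| * cA) k.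
Proof.
rewrite mul1r /ecoef /exp_coeff /= normrM normrM exprMn normrX.
have f0 : 0 <= (k`!%:R : R)^-1 by rewrite invr_ge0 ler0n.
rewrite (ger0_norm f0) [X in _ <= X]mulrAC.
apply: ler_wpM2l; first by rewrite mulr_ge0 // exprn_ge0.
exact: powA_bound.
Qed.

Lemma ecoef_cvg tau i j : cvgn (series (ecoef tau i j)).
Proof.
have := @series_bound R (ecoef tau i j) 1 (`|tau| * cA) ler01.
by case=> //; [rewrite mulr_ge0 // cA_ge0 | exact: ecoef_bound].
Qed.

Lemma expmtE tau i j : expmt A tau i j = limn (series (ecoef tau i j)).
Proof. by rewrite mxE. Qed.

Lemma expmt0 : expmt A 0 = 1.
Proof.
apply/matrixP => i j; rewrite expmtE.
have [_ <-] := lim_shiftS (@ecoef_cvg 0 i j).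
have -> : (fun N => series (ecoef 0 i j) N.+1) = fun _ => (1 : 'M[R]_n) i j.
  apply/funext => N; rewrite /series /= big_nat_recl // big1 ?addr0.
    by rewrite /ecoef expr0 fact0 divr1 mul1r expr0.
  by move=> k _; rewrite /ecoef expr0n /= mul0r mul0r.
exact: lim_cst.
Qed.

Lemma expmt_taylor tau h Y i j : 0 <= tau -> 0 <= h -> 0 < Y -> tau + h <= Y ->
  `|(expmt A (tau + h) - expmt A tau - h *: (expmt A tau *m A)) i j|
    <= h ^+ 2 / Y ^+ 2 * expR (4 * Y * cA).
Proof.
move=> t0 h0 Y0 tY.
have -> : (expmt A (tau + h) - expmt A tau - h *: (expmt A tau *m A)) i j
   = expmt A (tau + h) i j - expmt A tau i j - h * \sum_l expmt A tau i l * A l j.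
  by rewrite !mxE.
under eq_bigr do rewrite expmtE.
rewrite !expmtE.
pose g : R^nat := fun k => tau ^+ k / (k`!)%:R * (A ^+ k.+1) i j.
have [cg hsum] : cvgn (series g) /\
    \sum_l limn (series (ecoef tau i l)) * A l j = limn (series g).
  have [c1 e1] := @lim_series_big R _ (index_enum 'I_n)
      (fun l => A l j *: ecoef tau i l) (fun l => is_cvg_seriesZ (@ecoef_cvg tau i l)).
  have eg : (fun k => \sum_(l <- index_enum 'I_n) (A l j *: ecoef tau i l) k) = g.
    apply/funext => k; rewrite /g exprSr -mulmxE mxE mulr_sumr.
    apply: eq_bigr => l _; rewrite /ecoef /=.
    rewrite -[LHS]/(A l j * (tau ^+ k / k`!%:R * (A ^+ k) i l)); ring.
  rewrite eg in c1 e1; split => //; rewrite e1.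
  apply: eq_bigr => l _; rewrite lim_seriesZ; last exact: ecoef_cvg.
  by rewrite -[RHS]/(A l j * limn (series (ecoef tau i l))) mulrC.
pose g' : R^nat := fun k => h * k%:R * tau ^+ k.-1 / (k`!)%:R * (A ^+ k) i j.
have g'0 : g' 0%N = 0 by rewrite /g' mulr0 !mul0r.
have eg' : series (h *: g) = series (fun k => g' k.+1).
  congr series; apply/funext => k; rewrite -[LHS]/(h * g k) /g' /g /= factS natrM.
  have f0 : (k`!)%:R != 0 :> R by rewrite pnatr_eq0 -lt0n fact_gt0.
  have k0 : (k.+1)%:R != 0 :> R by rewrite pnatr_eq0.
  field; rewrite f0 /=; by rewrite -natr1 addrC in k0.
rewrite series_shift0 // in eg'.
have chg : cvgn (series (h *: g)) by exact: is_cvg_seriesZ.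
rewrite eg' in chg.
have [cg' lg'] := lim_shiftS_inv chg.
rewrite hsum.
have -> : h * limn (series g) = limn (series g').
  have e := lim_seriesZ h cg; rewrite eg' in e; by rewrite lg' e.
rewrite -lim_seriesB; [|exact: ecoef_cvg|exact: ecoef_cvg].
rewrite -lim_seriesB //; last first.
  by apply: is_cvg_seriesB; exact: ecoef_cvg.
apply: (proj2 (series_bound _ _ _)).
- by rewrite mulr_ge0 // ?invr_ge0 sqr_ge0.
- by rewrite mulr_ge0 // ?cA_ge0 //; lra.
move=> k.
have [D0 DY] := Dk_bound k t0 h0 Y0 tY.
set D := (tau + h) ^+ k - tau ^+ k - k%:R * h * tau ^+ k.-1 in D0 DY.
have -> : (ecoef (tau + h) i j - ecoef tau i j - g') k = D / (k`!)%:R * (A ^+ k) i j.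
  rewrite -[LHS]/(ecoef (tau + h) i j k - ecoef tau i j k - g' k).
  by rewrite /ecoef /g' /D /=; ring.
have f0 : 0 < (k`!)%:R :> R by rewrite ltr0n fact_gt0.
rewrite normrM ger0_norm ?divr_ge0 ?ler0n //.
rewrite /exp_coeff /= exprMn.
have hA := powA_bound k i j.
have DY' : D <= h ^+ 2 / Y ^+ 2 * (4 * Y) ^+ k.
  rewrite mulrAC ler_pdivlMr ?exprn_gt0 // mulrC //.
have cp : 0 <= cA ^+ k by rewrite exprn_ge0 // cA_ge0.
have : D / (k`!)%:R * `|(A ^+ k) i j| <= h ^+ 2 / Y ^+ 2 * (4 * Y) ^+ k / (k`!)%:R * cA ^+ k.
  apply: ler_pM => //; first by rewrite divr_ge0 // ltW.
  by rewrite ler_pM2r ?invr_gt0.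
move/le_trans; apply; rewrite le_eqVlt; apply/orP; left; apply/eqP => /=; ring.
Qed.

End MatExp.
Section Integ.
Variable R : realType.
Local Notation mu := (@lebesgue_measure R).

Lemma bounded_of (K : R) (g : R -> R) (D : set R) :
  (forall s, D s -> `|g s| <= K) -> [bounded g x | x in D].
Proof.
move=> h; exists K; split; first exact: num_real.
move=> M KM y Dy /=; apply: le_trans (h _ Dy) _; exact: ltW.
Qed.

Lemma mu_cc (T : R) : 0 <= T -> (mu `[0%R, T]%classic < +oo)%E.
Proof.
move=> T0; rewrite lebesgue_measure_itv /=; case: ifP => _; last exact: ltry.
by rewrite -EFinD ltry.
Qed.

Lemma intg (T : R) D (g : R -> R) K : 0 <= T -> measurable D -> D `<=` `[0, T]%classic ->
  measurable_fun (`[0, +oo[%classic : set R) g ->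
  (forall s, D s -> `|g s| <= K) -> mu.-integrable D (EFin \o g).
Proof.
move=> T0 mD DT mg hK; apply: measurable_bounded_integrable => //.
- apply: le_lt_trans (mu_cc T0).
  apply: le_measure; [rewrite inE; exact: mD | rewrite inE; exact: measurable_itv | exact: DT].
- apply: (measurable_funS _ _ mg); first exact: measurable_itv.
  by move=> y /DT /=; rewrite !in_itv /= => /andP[-> _].
- exact: bounded_of hK.
Qed.

Lemma mu_oc (a b : R) : a <= b -> fine (mu `]a, b]%classic) = b - a.
Proof.
move=> ab; rewrite lebesgue_measure_itv /=; case: ifP => [_|].
  by rewrite -EFinD.
rewrite lte_fin => /negbT; rewrite -leNgt => ba.
have -> : b = a by apply/eqP; rewrite eq_le ab ba.
by rewrite subrr.
Qed.

Lemma Rint_bound D (g : R -> R) K : measurable D -> (mu D < +oo)%E ->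
  mu.-integrable D (EFin \o g) ->
  (forall s, D s -> `|g s| <= K) ->
  `|Rintegral mu D g| <= K * fine (mu D).
Proof.
move=> mD Dfin ig hK.
have ic : forall c : R, mu.-integrable D (EFin \o cst c).
  move=> c; apply: measurable_bounded_integrable => //.
  exact: (@bounded_of `|c|).
rewrite ler_norml; apply/andP; split.
  rewrite -mulNr -Rintegral_cst //.
  apply: le_Rintegral; [exact: mD | exact: ic | exact: ig | move=> s Ds].
  by have := hK s Ds; rewrite ler_norml => /andP[].
rewrite -Rintegral_cst //.
apply: le_Rintegral; [exact: mD | exact: ig | exact: ic | move=> s Ds].
by have := hK s Ds; rewrite ler_norml => /andP[].
Qed.

End Integ.
Section Traj.
Variable R : realType.
Variable n : nat.
Variables (A : 'M[R]_n) (B : 'cV[R]_n) (x : R -> 'cV[R]_n) (u : R -> R).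
Hypothesis xc : forall i, {within [set t : R | 0 <= t], continuous (fun t => x t i ord0)}.
Hypothesis um : measurable_fun (`[0, +oo[%classic : set R) u.

Lemma Dp_eq : [set t : R | 0 <= t] = `[0, +oo[%classic.
Proof. by apply/seteqP; split => y /=; rewrite in_itv /= andbT. Qed.

Lemma xm i : measurable_fun (`[0, +oo[%classic : set R) (fun t => x t i ord0).
Proof.
have := @xc i; rewrite Dp_eq => h.
apply: subspace_continuous_measurable_fun => //; exact: measurable_itv.
Qed.

Definition fv i := fun s => (A *m x s - u s *: B) i ord0.

Lemma fm i : measurable_fun (`[0, +oo[%classic : set R) (fv i).
Proof.
have -> : fv i = (fun s => \sum_(l <- index_enum 'I_n) A i l * x s l ord0) \- (fun s => u s * B i ord0).
  by apply/funext => s; rewrite /fv !mxE.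
apply: measurable_funB.
  apply: measurable_sum => l; exact: (measurable_funM (measurable_cst (A i l)) (xm l)).
exact: (measurable_funM um (measurable_cst (B i ord0))).
Qed.

Lemma xbound T : 0 <= T -> exists X, 0 <= X /\ forall s, 0 <= s <= T -> forall i, `|x s i ord0| <= X.
Proof.
move=> T0.
have H : forall i : 'I_n, exists X : R, 0 <= X /\ forall s, 0 <= s <= T -> `|x s i ord0| <= X.
  move=> i.
  have c : {within `[0, T]%classic, continuous (fun t => x t i ord0)}.
    apply: continuous_subspaceW (@xc i) => y /=; rewrite in_itv /= => /andP[] //.
  have := continuous_compact c (@segment_compact _ 0 T).
  move/compact_bounded => [M [_ HM]].
  exists (`|M| + 1); split; first by rewrite addr_ge0.
  move=> s sT; apply: (HM (`|M| + 1)); first by rewrite (le_lt_trans (ler_norm M)) // ltrDl.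
  by exists s => //=; rewrite in_itv /=.
have [Xf hX] := fin_all_exists H.
exists (\sum_i Xf i); split; first by apply: sumr_ge0 => i _; case: (hX i).
move=> s sT i; case: (hX i) => _ /(_ s sT) h; apply: le_trans h _.
rewrite (bigD1 i) //= lerDl; apply: sumr_ge0 => j _; by case: (hX j).
Qed.

Hypothesis ub : forall s, 0 <= s -> `|u s| <= 1.
Hypothesis xi : forall t, 0 <= t -> forall i,
  x t i ord0 = x 0 i ord0 + Rintegral lebesgue_measure `[0, t]%classic (fv i).
Variables (T X : R).
Hypothesis T0 : 0 <= T.
Hypothesis X0 : 0 <= X.
Hypothesis hX : forall s, 0 <= s <= T -> forall i, `|x s i ord0| <= X.

Definition KF := mnrm A * X + vnorm2 B.

Lemma rowsum_le (Q : 'M[R]_n) i : \sum_l `|Q i l| <= mnrm Q.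
Proof.
rewrite /mnrm [X in _ <= X](bigD1 i) //= lerDl; apply: sumr_ge0 => k _; exact: sumr_ge0.
Qed.

Lemma fvE i s : fv i s = \sum_l A i l * x s l ord0 - u s * B i ord0.
Proof. by rewrite /fv !mxE. Qed.

Lemma KF_ge0 : 0 <= KF.
Proof. by rewrite /KF addr_ge0 ?mulr_ge0 ?mnrm_ge0 ?vnorm2_ge0. Qed.

Lemma fbound i s : 0 <= s <= T -> `|fv i s| <= KF.
Proof.
move=> sT; rewrite fvE /KF; apply: le_trans (ler_normB _ _) _.
apply: lerD.
  apply: le_trans (ler_norm_sum _ _ _) _.
  apply: le_trans (_ : \sum_l `|A i l| * X <= _).
    apply: ler_sum => l _; rewrite normrM; apply: ler_wpM2l => //; exact: hX.
  by rewrite -mulr_suml; apply: ler_wpM2r => //; exact: rowsum_le.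
rewrite normrM; apply: le_trans (_ : 1 * `|B i ord0| <= _).
  apply: ler_wpM2r => //; apply: ub; by case/andP: sT.
by rewrite mul1r entry_le_vnorm2.
Qed.

Local Notation mu := (@lebesgue_measure R).

Lemma fint i D : measurable D -> D `<=` `[0, T]%classic -> mu.-integrable D (EFin \o fv i).
Proof.
move=> mD DT; apply: (intg T0 mD DT (fm i)) => s /DT /=; rewrite in_itv /= => sT.
exact: fbound.
Qed.

Lemma xdiff i a b : 0 <= a -> a <= b -> b <= T ->
  x b i ord0 - x a i ord0 = Rintegral mu `]a, b]%classic (fv i).
Proof.
move=> a0 ab bT.
rewrite (xi (le_trans a0 ab)) (xi a0) opprD addrACA subrr add0r.
rewrite (Rintegral_itvB (a := BLeft 0) (b := BRight b) (x := a)) //.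
- apply: fint; first exact: measurable_itv.
  move=> y /=; rewrite !in_itv /= => /andP[-> yb] /=; exact: le_trans yb bT.
Qed.

Lemma oc_sub a b : 0 <= a -> b <= T -> `]a, b]%classic `<=` `[0, T]%classic.
Proof.
move=> a0 bT y /=; rewrite !in_itv /= => /andP[ay yb].
by rewrite (le_trans a0 (ltW ay)) (le_trans yb bT).
Qed.

Lemma mu_oc_fin (a b : R) : (mu `]a, b]%classic < +oo)%E.
Proof.
rewrite lebesgue_measure_itv /=; case: ifP => _; last exact: ltry.
by rewrite -EFinD ltry.
Qed.

Lemma lip i a s : 0 <= a -> a <= s -> s <= T ->
  `|x s i ord0 - x a i ord0| <= KF * (s - a).
Proof.
move=> a0 as_ sT; rewrite xdiff // -(mu_oc as_).
apply: Rint_bound; first exact: measurable_itv.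
- exact: mu_oc_fin.
- apply: fint; [exact: measurable_itv | exact: oc_sub].
move=> y /(oc_sub a0 sT) /=; rewrite in_itv /=; exact: fbound.
Qed.

Lemma uint a b : 0 <= a -> a <= b -> b <= T ->
  `|Rintegral mu `]a, b]%classic u| <= b - a.
Proof.
move=> a0 ab bT; rewrite -(mu_oc ab) -[X in _ <= X]mul1r.
apply: Rint_bound; first exact: measurable_itv.
- exact: mu_oc_fin.
- apply: (intg T0 (measurable_itv _) (oc_sub a0 bT) um) => y /(oc_sub a0 bT) /=.
  rewrite in_itv /= => /andP[y0 _]; exact: ub.
move=> y /(oc_sub a0 bT) /=; rewrite in_itv /= => /andP[y0 _]; exact: ub.
Qed.

Lemma local_err i a h : 0 <= a -> 0 <= h -> a + h <= T ->
  `|x (a + h) i ord0 - x a i ord0 - h * (A *m x a) i ord0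
     + Rintegral mu `]a, a + h]%classic u * B i ord0| <= h ^+ 2 * (mnrm A * KF).
Proof.
move=> a0 h0 ahT.
have aah : a <= a + h by lra.
set D := `]a, a + h]%classic.
have mD : measurable D by exact: measurable_itv.
have DT : D `<=` `[0, T]%classic by exact: oc_sub.
set c := (A *m x a) i ord0.
set b := B i ord0.
have iu : mu.-integrable D (EFin \o u).
  apply: (intg T0 mD DT um) => y /DT /=; rewrite in_itv /= => /andP[y0 _]; exact: ub.
have iub : mu.-integrable D (EFin \o (fun s => u s * b)).
  apply: (intg (K := `|b|) T0 mD DT (measurable_funM um (measurable_cst b))) => y /DT /=.
  rewrite in_itv /= => /andP[y0 _]; rewrite normrM -[X in _ <= X]mul1r.
  by apply: ler_wpM2r => //; exact: ub.
have ifv := fint i mD DT.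
have iF : mu.-integrable D (EFin \o (fun s => fv i s + u s * b)).
  apply: (intg (K := KF + `|b|) T0 mD DT (measurable_funD (fm i) (measurable_funM um (measurable_cst b)))) => y /DT /=.
  rewrite in_itv /= => yT; apply: le_trans (ler_normD _ _) _; apply: lerD; first exact: fbound.
  rewrite normrM -[X in _ <= X]mul1r; apply: ler_wpM2r => //; apply: ub; by case/andP: yT.
have ic : mu.-integrable D (EFin \o cst c).
  apply: (intg (K := `|c|) T0 mD DT (measurable_cst c)) => y _; exact: lexx.
have E : Rintegral mu D (fun s => fv i s + u s * b - c)
    = x (a + h) i ord0 - x a i ord0 - h * c + Rintegral mu D u * b.
  rewrite (RintegralB (f2 := cst c)) // RintegralD // RintegralZr // Rintegral_cst //.
  rewrite mu_oc // -xdiff //.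
  have -> : a + h - a = h by ring.
  ring.
rewrite -E.
have -> : h ^+ 2 * (mnrm A * KF) = (mnrm A * KF * h) * fine (mu D).
  rewrite mu_oc //; have -> : a + h - a = h by ring.
  ring.
apply: Rint_bound => //.
- exact: mu_oc_fin.
- apply: (intg (K := KF + `|b| + `|c|) T0 mD DT (measurable_funB (measurable_funD (fm i) (measurable_funM um (measurable_cst b))) (measurable_cst c))) => y /DT /=.
  rewrite in_itv /= => yT; apply: le_trans (ler_normB _ _) _; apply: lerD => //.
  apply: le_trans (ler_normD _ _) _; apply: lerD; first exact: fbound.
  rewrite normrM -[X in _ <= X]mul1r; apply: ler_wpM2r => //; apply: ub; by case/andP: yT.
move=> y /= Dy.
have := Dy; rewrite /D /= in_itv /= => /andP[ay yah].
have eq : fv i y + u y * b - c = \sum_l A i l * (x y l ord0 - x a l ord0).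
  rewrite fvE /c mxE /b subrK -sumrB.
  by apply: eq_bigr => l _; rewrite mulrBr.
rewrite eq; apply: le_trans (ler_norm_sum _ _ _) _.
apply: le_trans (_ : \sum_l `|A i l| * (KF * h) <= _).
  apply: ler_sum => l _; rewrite normrM; apply: ler_wpM2l => //.
  apply: le_trans (lip _ a0 (ltW ay) (le_trans yah ahT)) _.
  apply: ler_wpM2l; [exact: KF_ge0 | lra].
rewrite -mulr_suml mulrA; apply: ler_wpM2r; first exact: h0.
by apply: ler_wpM2r; [exact: KF_ge0 | exact: rowsum_le].
Qed.

End Traj.
Section Aux.
Variable R : realType.

Lemma zmod_id (V : zmodType) (P Q Rr S : V) : P - S = (P - Q - Rr) - (S - Q - Rr).
Proof.
by rewrite opprB addrA subrK opprB addrA subrK.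
Qed.

Lemma exp_aux (y : R) : 0 <= y -> expR y - 1 <= y * expR y.
Proof.
move=> y0; have := expR_ge1Dx (- y).
have e : expR y * expR (- y) = 1 by exact: expRxMexpNx_1.
have ep : 0 < expR y by exact: expR_gt0.
move=> h.
have : expR y * (1 - y) <= expR y * expR (- y).
  by apply: ler_wpM2l; [exact: ltW| lra].
rewrite e; nra.
Qed.

Lemma final_arch (v L K : R) : 0 <= K ->
  (forall N : nat, (0 < N)%N -> v <= L + K / N%:R) -> v <= L.
Proof.
move=> K0 H; apply/ler_addgt0Pr => e e0.
set N := (Num.Def.trunc (K / e)).+1.
have hN := truncnS_gt (K / e).
have Np : 0 < N%:R :> R by rewrite ltr0n.
apply: le_trans (H N isT) _; rewrite lerD2l.
rewrite ler_pdivrMr //; rewrite -/N in hN.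
have : K / e * e <= N%:R * e by apply: ler_wpM2r; [exact: ltW | exact: ltW].
rewrite mulfVK ?gt_eqF // => h; rewrite mulrC; exact: h.
Qed.

Lemma geom (sigma t : R) (N : nat) : 0 < sigma -> 0 < t -> (0 < N)%N ->
  t / N%:R * \sum_(0 <= k < N) expR (- sigma * (t - k.+1%:R * (t / N%:R)))
  <= expR (sigma * (t / N%:R)) / sigma.
Proof.
move=> s0 t0 N0; set h := t / N%:R.
have h0 : 0 < h by rewrite divr_gt0 // ltr0n.
set S := \sum_(0 <= k < N) _.
set q := expR (- sigma * h).
have q0 : 0 < q by exact: expR_gt0.
have S0 : 0 <= S by apply: sumr_ge0 => k _; exact: ltW (expR_gt0 _).
have e1 : S - q * S = 1 - expR (- sigma * t).
  rewrite /S mulr_sumr -sumrB.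
  rewrite (telescope_sumr_eq (fun k => expR (- sigma * (t - k%:R * h)))) //.
    have Nn0 : N%:R != 0 :> R by rewrite pnatr_eq0 -lt0n.
    have -> : t - N%:R * h = 0 by rewrite /h mulrC divfK // subrr.
    by rewrite mulr0 expR0 mul0r subr0.
  move=> k _; rewrite /q -expRD; congr (_ - expR _); rewrite -natr1; ring.
have e2 : sigma * h * q <= 1 - q.
  have := expR_ge1Dx (sigma * h).
  have ee : expR (sigma * h) * q = 1 by rewrite /q mulNr expRxMexpNx_1.
  move=> hh.
  have : (1 + sigma * h) * q <= expR (sigma * h) * q by apply: ler_wpM2r => //; exact: ltW.
  rewrite ee; lra.
have e3 : sigma * h * q * S <= 1.
  apply: le_trans (_ : (1 - q) * S <= 1).
    by apply: ler_wpM2r.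
  have : 0 < expR (- sigma * t) by exact: expR_gt0.
  nra.
have ee : expR (sigma * h) * q = 1 by rewrite /q mulNr expRxMexpNx_1.
rewrite ler_pdivlMr //.
have ep : 0 < expR (sigma * h) by exact: expR_gt0.
have H : expR (sigma * h) * (sigma * h * q * S) <= expR (sigma * h) * 1.
  by apply: ler_wpM2l => //; exact: ltW.
have e4 : expR (sigma * h) * (sigma * h * q * S) = h * S * sigma * (expR (sigma * h) * q) by ring.
by rewrite e4 ee !mulr1 in H.
Qed.
End Aux.
Lemma sum_le_const (R : realType) (n : nat) (F : 'I_n -> R) (c : R) :
  (forall i, F i <= c) -> \sum_(i < n) F i <= n%:R * c.
Proof.
move=> H; apply: le_trans (_ : \sum_(i < n) c <= _); first by apply: ler_sum => i _; exact: H.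
by rewrite sumr_const card_ord mulr_natl.
Qed.

Lemma term_bound_gen (R : realType) (n : nat) (A : 'M[R]_n) (B : 'cV[R]_n)
  (x : R -> 'cV[R]_n) (u : R -> R)
  (xc : forall i, {within [set t : R | 0 <= t], continuous (fun t => x t i ord0)})
  (um : measurable_fun (`[0, +oo[%classic : set R) u)
  (ub : forall s, 0 <= s -> `|u s| <= 1)
  (xi : forall t, 0 <= t -> forall i,
     x t i ord0 = x 0 i ord0 + Rintegral lebesgue_measure `[0, t]%classic (fv A B x u i))
  (T X Minit sigma : R) (T0 : 0 < T) (X0 : 0 <= X)
  (hX : forall s, 0 <= s <= T -> forall i, `|x s i ord0| <= X)
  (M0 : 0 <= Minit) (s0 : 0 < sigma)
  (hE : forall t, 0 <= t -> opnorm2 (expmt A t) <= Minit * expR (- sigma * t))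
  (sk h : R) : 0 <= sk -> 0 <= h -> sk + h <= T ->
  vnorm2 (expmt A (T - (sk + h)) *m x (sk + h) - expmt A (T - (sk + h) + h) *m x sk)
   <= Minit * vnorm2 B * (h * expR (- sigma * (T - (sk + h))))
      + h ^+ 2 * (Minit * (n%:R * (mnrm A * KF A B X))
                  + n%:R * n%:R * (expR (4 * T * cA A) / T ^+ 2) * (n%:R * X)).
Proof.
move=> sk0 h0 skT.
set tk := T - (sk + h).
have tk0 : 0 <= tk by rewrite /tk subr_ge0.
set E1 := expmt A tk; set E2 := expmt A (tk + h).
set x1 := x (sk + h); set x0 := x sk.
set dv := x1 - x0 - h *: (A *m x0).
set Dm := E2 - E1 - h *: (E1 *m A).
have eq : E1 *m x1 - E2 *m x0 = E1 *m dv - Dm *m x0.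
  rewrite /dv /Dm !mulmxBr !mulmxBl -!scalemxAr -!scalemxAl mulmxA.
  exact: zmod_id.
rewrite eq; apply: le_trans (vnorm2D _ _) _; rewrite vnorm2N.
set I := Rintegral lebesgue_measure `]sk, sk + h]%classic u.
set rv := dv + I *: B.
have rvb : vnorm2 rv <= n%:R * (h ^+ 2 * (mnrm A * KF A B X)).
  apply: le_trans (vnorm2_le_sum _) _.
  apply: sum_le_const => i.
  have := local_err xc um ub xi (ltW T0) X0 hX i sk0 h0 skT.
  by rewrite /rv /dv !mxE.
have dvb : vnorm2 dv <= n%:R * (h ^+ 2 * (mnrm A * KF A B X)) + h * vnorm2 B.
  have -> : dv = rv - I *: B by rewrite /rv addrK.
  apply: le_trans (vnorm2D _ _) _; rewrite vnorm2N vnorm2Z; apply: lerD => //.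
  apply: ler_wpM2r; first exact: vnorm2_ge0.
  have skh : sk <= sk + h by lra.
  have := uint um ub (ltW T0) sk0 skh skT.
  have -> : sk + h - sk = h by ring.
  by [].
have w1 : expR (- sigma * tk) <= 1 by rewrite expR_le1; nra.
have w0 : 0 < expR (- sigma * tk) by exact: expR_gt0.
have b1 : vnorm2 (E1 *m dv) <= Minit * expR (- sigma * tk) * vnorm2 dv.
  apply: le_trans (opnorm2_bound _ _) _; apply: ler_wpM2r; first exact: vnorm2_ge0.
  exact: hE.
have mDm : mnrm Dm <= n%:R * n%:R * (h ^+ 2 / T ^+ 2 * expR (4 * T * cA A)).
  rewrite /mnrm -mulrA; apply: sum_le_const => i; apply: sum_le_const => j.
  rewrite /Dm /E1 /E2.
  apply: expmt_taylor => //; rewrite /tk; lra.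
have xb : vnorm2 x0 <= n%:R * X.
  apply: le_trans (vnorm2_le_sum _) _.
  apply: sum_le_const => i; apply: hX; lra.
have b2 : vnorm2 (Dm *m x0) <= n%:R * n%:R * (h ^+ 2 / T ^+ 2 * expR (4 * T * cA A)) * (n%:R * X).
  apply: le_trans (vnorm2_mul_mnrm _ _) _.
  apply: ler_pM => //; [exact: mnrm_ge0 | exact: vnorm2_ge0].
apply: le_trans (lerD b1 b2) _.
have KF0 : 0 <= KF A B X by exact: KF_ge0.
have mA0 : 0 <= mnrm A by exact: mnrm_ge0.
have B0 : 0 <= vnorm2 B by exact: vnorm2_ge0.
have nn : 0 <= n%:R :> R by exact: ler0n.
set e := expR (- sigma * tk) in w1 w0 b1 *.
have : Minit * e * vnorm2 dv <= Minit * e * (n%:R * (h ^+ 2 * (mnrm A * KF A B X)) + h * vnorm2 B).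
  by apply: ler_wpM2l => //; rewrite mulr_ge0 // ltW.
have : Minit * e * (n%:R * (h ^+ 2 * (mnrm A * KF A B X))) <= Minit * 1 * (n%:R * (h ^+ 2 * (mnrm A * KF A B X))).
  apply: ler_wpM2r; first by rewrite !mulr_ge0 // sqr_ge0.
  exact: ler_wpM2l.
have -> : n%:R * n%:R * (h ^+ 2 / T ^+ 2 * expR (4 * T * cA A)) * (n%:R * X)
  = h ^+ 2 * (n%:R * n%:R * (expR (4 * T * cA A) / T ^+ 2) * (n%:R * X)) by ring.
move=> H1 H2.
lra.
Qed.
Lemma main_gen (R : realType) (n : nat) (A : 'M[R]_n) (B : 'cV[R]_n)
  (Minit sigma : R) (x : R -> 'cV[R]_n) (u : R -> R) :
  (0 < n)%N -> 0 < Minit -> 0 < sigma ->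
  (forall t : R, 0 <= t -> opnorm2 (expmt A t) <= Minit * expR (- sigma * t)) ->
  (forall i, {within [set t : R | 0 <= t], continuous (fun t => x t i ord0)}) ->
  measurable_fun (`[0, +oo[%classic : set R) u ->
  (forall s, 0 <= s -> `|u s| <= 1) ->
  (forall t, 0 <= t -> forall i,
     x t i ord0 = x 0 i ord0 + Rintegral lebesgue_measure `[0, t]%classic (fv A B x u i)) ->
  vnorm2 (x 0) <= 2 * Minit * vnorm2 B / sigma ->
  forall t : R, ln (2 * Minit) / sigma < t ->
    vnorm2 (x t) <= 2 * Minit * vnorm2 B / sigma.
Proof.
move=> n0 M0 s0 hE xc um ub xi hx0 t ht.
have M1 : 1 <= Minit.
  have := hE 0 (lexx 0); rewrite expmt0 mulr0 expR0 mulr1 => h1.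
  pose v : 'cV[R]_n := const_mx 1.
  have v1 : 1 <= vnorm2 v by have := entry_le_vnorm2 v (Ordinal n0); rewrite mxE normr1.
  have := opnorm2_bound 1 v; rewrite mul1mx => h2.
  have h3 : 1 <= opnorm2 (1 : 'M[R]_n).
    rewrite -[X in X <= _](@divff _ (vnorm2 v)); last by rewrite gt_eqF // (lt_le_trans ltr01 v1).
    by rewrite ler_pdivrMr ?(lt_le_trans ltr01 v1).
  exact: le_trans h3 h1.
have l0 : 0 <= ln (2 * Minit) by apply: ln_ge0; lra.
have t0 : 0 < t by apply: le_lt_trans ht; rewrite divr_ge0 // ltW.
have al : Minit * expR (- sigma * t) <= 2^-1.
  have h1 : ln (2 * Minit) < t * sigma by rewrite -ltr_pdivrMr.
  have h2 : expR (- sigma * t) <= expR (- ln (2 * Minit)) by rewrite ler_expR; lra.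
  rewrite expRN lnK ?posrE in h2; last by lra.
  have : Minit * expR (- sigma * t) <= Minit * (2 * Minit)^-1 by apply: ler_wpM2l; lra.
  by rewrite invfM mulrCA divff ?mulr1 //; lra.
have [X [X0 hX]] := xbound xc (ltW t0).
set L := 2 * Minit * vnorm2 B / sigma.
have B0 : 0 <= vnorm2 B by exact: vnorm2_ge0.
have L0 : 0 <= L by rewrite /L divr_ge0 ?mulr_ge0 //; lra.
set K4 := Minit * (n%:R * (mnrm A * KF A B X))
  + n%:R * n%:R * (expR (4 * t * cA A) / t ^+ 2) * (n%:R * X).
have K40 : 0 <= K4.
  have e4 : 0 <= expR (4 * t * cA A) by exact: ltW (expR_gt0 _).
  have kf : 0 <= KF A B X by exact: KF_ge0.
  have ma : 0 <= mnrm A by exact: mnrm_ge0.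
  have nn : 0 <= n%:R :> R by exact: ler0n.
  have tt : 0 <= t ^+ 2 by exact: sqr_ge0.
  rewrite /K4; apply: addr_ge0.
    by apply: mulr_ge0; [lra | apply: mulr_ge0 => //; exact: mulr_ge0].
  by apply: mulr_ge0; [apply: mulr_ge0; [exact: mulr_ge0 | exact: divr_ge0] | exact: mulr_ge0].
have et0 : 0 < expR (sigma * t) by exact: expR_gt0.
apply: (@final_arch R _ _ (t * (L / 2 * sigma * expR (sigma * t)) + t * (t * K4))).
  have : 0 <= L / 2 * sigma * expR (sigma * t).
    by apply: mulr_ge0; [apply: mulr_ge0; lra | exact: ltW].
  have : 0 <= t * K4 by apply: mulr_ge0 => //; exact: ltW.
  move=> a1 a2; apply: addr_ge0; apply: mulr_ge0 => //; exact: ltW.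
move=> N N0.
set h := t / N%:R.
have Nn0 : N%:R != 0 :> R by rewrite pnatr_eq0 -lt0n.
have Np : 0 < N%:R :> R by rewrite ltr0n.
have h0 : 0 < h by rewrite divr_gt0.
have hN : N%:R * h = t by rewrite /h mulrC divfK.
have N1 : 1 <= N%:R :> R by rewrite ler1n.
have ht' : h <= t by rewrite -hN; nra.
pose phi k := expmt A (t - k%:R * h) *m x (k%:R * h).
have tel : x t = expmt A t *m x 0 + \sum_(0 <= k < N) (phi k.+1 - phi k).
  rewrite telescope_sumr // /phi hN subrr expmt0 mul1mx mul0r subr0.
  by rewrite addrC subrK.
rewrite tel; apply: le_trans (vnorm2D _ _) _.
have F1 : vnorm2 (expmt A t *m x 0) <= 2^-1 * L.
  apply: le_trans (opnorm2_bound _ _) _.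
  apply: le_trans (_ : Minit * expR (- sigma * t) * vnorm2 (x 0) <= _).
    by apply: ler_wpM2r; [exact: vnorm2_ge0 | apply: hE; exact: ltW].
  apply: ler_pM => //; [by rewrite mulr_ge0 // ?ltW ?expR_gt0 //; lra | exact: vnorm2_ge0].
have F2 : vnorm2 (\sum_(0 <= k < N) (phi k.+1 - phi k))
   <= \sum_(0 <= k < N) (Minit * vnorm2 B * (h * expR (- sigma * (t - k.+1%:R * h))) + h ^+ 2 * K4).
  apply: le_trans (vnorm2_sum _ _) _.
  rewrite big_nat [X in _ <= X]big_nat; apply: ler_sum => k /andP[_ kN].
  have e1 : k.+1%:R * h = k%:R * h + h by rewrite -natr1; ring.
  have e2 : t - k%:R * h = t - (k%:R * h + h) + h by ring.
  rewrite /phi e1 e2.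
  have k0 : 0 <= k%:R * h by rewrite mulr_ge0 // ?ler0n ?ltW.
  have kT : k%:R * h + h <= t.
    rewrite -e1 -hN; apply: ler_wpM2r; first exact: ltW.
    by rewrite ler_nat.
  apply: le_trans (term_bound_gen xc um ub xi t0 X0 hX (ltW M0) s0 hE k0 (ltW h0) kT) _.
  by rewrite /K4.
apply: le_trans (lerD F1 F2) _.
rewrite big_split /= -mulr_sumr sumr_const_nat subn0.
have G := geom s0 t0 N0; rewrite -/h in G.
have G2 : Minit * vnorm2 B * (h * \sum_(0 <= k < N) expR (- sigma * (t - k.+1%:R * h)))
   <= Minit * vnorm2 B * (expR (sigma * h) / sigma).
  by apply: ler_wpM2l => //; rewrite mulr_ge0 //; lra.
have G3 : Minit * vnorm2 B * (expR (sigma * h) / sigma) = L / 2 * expR (sigma * h).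
  rewrite /L; field; lra.
have G4 : expR (sigma * h) <= 1 + sigma * h * expR (sigma * t).
  have sh : 0 <= sigma * h by rewrite mulr_ge0 // ltW.
  have H := exp_aux sh.
  have H2 : expR (sigma * h) <= expR (sigma * t).
    by rewrite ler_expR; apply: ler_wpM2l => //; exact: ltW.
  have H3 : sigma * h * expR (sigma * h) <= sigma * h * expR (sigma * t).
    exact: ler_wpM2l.
  lra.
have G5 : h ^+ 2 * K4 *+ N = h * (t * K4).
  by rewrite -mulr_natr -hN; ring.
have eK : (t * (L / 2 * sigma * expR (sigma * t)) + t * (t * K4)) / N%:R
    = h * (L / 2 * sigma * expR (sigma * t)) + h * (t * K4).
  by rewrite /h; field.
rewrite eK G5 -mulr_sumr.
have G6 : L / 2 * expR (sigma * h) <= L / 2 * (1 + sigma * h * expR (sigma * t)).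
  by apply: ler_wpM2l => //; lra.
lra.
Qed.
Lemma sign_set_bound (R : realType) (e v : R) : sign_set e v -> `|v| <= 1.
Proof.
rewrite /sign_set; case: ifP => _; first by move=> ->; rewrite normr1.
case: ifP => _; first by move=> ->; rewrite normrN normr1.
by rewrite /= in_itv /= => /andP[h1 h2]; rewrite ler_norml h1 h2.
Qed.

Theorem mainTheorem8 (R : realType) (n : nat) (a b : 'I_n -> R)
    (Minit sigma : R) (x : R -> 'cV[R]_n) :
  (0 < n)%N ->
  hurwitz (obsA a) ->
  0 < Minit -> 0 < sigma ->
  (forall t : R, 0 <= t -> opnorm2 (expmt (obsA a) t) <= Minit * expR (- sigma * t)) ->
  filippov_solution (obsA a) (obsB b) (obsC R n) x ->
  non_sliding (obsC R n) x ->
  vnorm2 (x 0) <= 2 * Minit * vnorm2 (obsB b) / sigma ->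
  forall t : R, ln (2 * Minit) / sigma < t ->
    vnorm2 (x t) <= 2 * Minit * vnorm2 (obsB b) / sigma.
Proof.
move=> n0 _ M0 s0 hE [xc [u [um [us xi]]]] _ hx0 t ht.
apply: (main_gen (u := u) n0 M0 s0 hE xc um _ _ hx0 ht).
  by move=> s sp; exact: sign_set_bound (us s sp).
exact: xi.
Qed.
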